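(* Let $r>0$ and $x,y\in\mathbb{R}^2$ with $d:=\|x-y\|>r$. Let $p_1,p_2$ be the two intersection points of the circles $\partial B(x,r)$ and $\partial B(y,d)$. Then $W(x,y;r)=B(p_1,r)\cap B(p_2,r)$.
   Context: $B(z,\rho)=\{w\in\mathbb{R}^2:\|z-w\|\le\rho\}$ is the closed Euclidean ball. For $x,y\in\mathbb{R}^2$ and $r>0$, $W(x,y;r):=\{z\in\mathbb{R}^2: B(z,r)\supseteq B(x,r)\cap B(y,\|x-y\|)\}$. *)

(* Defs.v *)
From Stdlib Require Import Reals.
Open Scope R_scope.

Definition pt := (R * R)%type.

Definition dist2 (z w : pt) : R :=
  sqrt ((fst z - fst w) ^ 2 + (snd z - snd w) ^ 2).

Definition ball (z : pt) (rho : R) (w : pt) : Prop := dist2 z w <= rho.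

Definition Wset (x y : pt) (r : R) (z : pt) : Prop :=
  forall w : pt, ball x r w /\ ball y (dist2 x y) w -> ball z r w.

(* Main.v *)
Require Import Defs.
From Stdlib Require Import Reals Lra Psatz.
Open Scope R_scope.
Lemma nice (a b d r s t u v : R) :
  0 < r -> r < d -> 0 < b -> 2*a*d = r^2 -> a^2+b^2 = r^2 ->
  (s-a)^2+(t-b)^2 <= r^2 -> (s-a)^2+(t+b)^2 <= r^2 ->
  u^2+v^2 <= r^2 -> (u-d)^2+v^2 <= d^2 ->
  (s-u)^2+(t-v)^2 <= r^2.
Proof.
  intros hr hrd hb had hab h1 h2 h3 h4.
  assert (ha : 0 < a) by nra.
  assert (hs : s^2+t^2 <= 2*a*s) by nra.
  assert (hs0 : 0 <= s) by nra.
  assert (hs2 : s <= 2*a) by nra.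
  assert (hst : s^2+t^2 <= 2*a*s - 2*b*Rabs t).
  { destruct (Rle_dec 0 t); [rewrite Rabs_right by lra|rewrite Rabs_left by lra]; nra. }
  assert (hu0 : 0 <= u) by nra.
  assert (hvb : v^2 <= b^2).
  { destruct (Rle_dec a u). nra. assert (a < d) by nra. assert ((a-u)*(2*d-a-u) >= 0) by nra. nra. }
  assert (hvb' : Rabs v <= b).
  { destruct (Rle_dec 0 v); [rewrite Rabs_right by lra|rewrite Rabs_left by lra]; nra. }
  assert (htv : - (Rabs t * b) <= t*v).
  { destruct (Rle_dec 0 t); [rewrite Rabs_right by lra|rewrite Rabs_left by lra];
    destruct (Rle_dec 0 v); [rewrite Rabs_right in hvb' by lra|rewrite Rabs_left in hvb' by lra|rewrite Rabs_right in hvb' by lra|rewrite Rabs_left in hvb' by lra]; nra. }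
  destruct (Rle_dec a u).
  - assert (s*(u-a) >= 0) by nra.
    replace ((s-u)^2+(t-v)^2) with ((s^2+t^2) - 2*(s*u) - 2*(t*v) + (u^2+v^2)) by ring.
    replace (b * Rabs t) with (Rabs t * b) in hst by ring. nra.
  - assert (s < d) by nra.
    assert ((a-u)*(d-s) >= 0) by (apply Rle_ge, Rmult_le_pos; lra).
    replace ((s-u)^2+(t-v)^2) with ((s^2+t^2) - 2*(s*u) - 2*(t*v) + (u^2+v^2)) by ring.
    replace (b * Rabs t) with (Rabs t * b) in hst by ring. nra.
Qed.
Lemma pars (y1 y2 n1 n2 v1 v2 d n : R): 0<d -> 0<n -> d^2 = y1^2+y2^2 -> n^2 = n1^2+n2^2 ->
  y1*n1+y2*n2 = 0 ->
  v1^2+v2^2 = ((v1*y1+v2*y2)/d)^2 + ((v1*n1+v2*n2)/n)^2.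
Proof.
  intros hd hn hD hK hc.
  assert (E : (v1*y1+v2*y2)^2*(n1^2+n2^2) + (v1*n1+v2*n2)^2*(y1^2+y2^2)
     - (v1^2+v2^2)*(y1^2+y2^2)*(n1^2+n2^2)
     = (y1*n1+y2*n2)*(2*(v1*y1+v2*y2)*(v1*n1+v2*n2) - (y1*n1+y2*n2)*(v1^2+v2^2))) by ring.
  rewrite hc, <- hD, <- hK in E.
  replace (((v1*y1+v2*y2)/d)^2 + ((v1*n1+v2*n2)/n)^2) with
    (((v1*y1+v2*y2)^2*n^2 + (v1*n1+v2*n2)^2*d^2)/(d^2*n^2)) by (field; lra).
  replace ((v1*y1+v2*y2)^2*n^2 + (v1*n1+v2*n2)^2*d^2) with ((v1^2+v2^2)*(d^2*n^2)) by lra.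
  field. lra.
Qed.

Lemma sq_le (Q r : R) : 0 <= r -> 0 <= Q -> sqrt Q <= r -> Q <= r^2.
Proof. intros h1 h2 h3. pose proof (sqrt_sqrt Q h2). pose proof (sqrt_pos Q). nra. Qed.
Lemma le_sq (Q r : R) : 0 <= r -> Q <= r^2 -> sqrt Q <= r.
Proof. intros h1 h2. rewrite <- (sqrt_pow2 r h1). apply sqrt_le_1_alt. exact h2. Qed.
Lemma sq_eq (Q r : R) : 0 <= Q -> sqrt Q = r -> Q = r^2.
Proof. intros h1 h2. rewrite <- h2. simpl. rewrite Rmult_1_r. symmetry. apply sqrt_sqrt. exact h1. Qed.

Lemma dist2_sym (a b : pt) : dist2 a b = dist2 b a.
Proof. unfold dist2. f_equal. ring. Qed.

Ltac sos2 := apply Rplus_le_le_0_compat; apply pow2_ge_0.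

Theorem mainTheorem10 (r : R) (x y p1 p2 : pt) :
  0 < r -> r < dist2 x y ->
  p1 <> p2 ->
  dist2 x p1 = r -> dist2 y p1 = dist2 x y ->
  dist2 x p2 = r -> dist2 y p2 = dist2 x y ->
  forall z : pt, Wset x y r z <-> (ball p1 r z /\ ball p2 r z).
Proof.
  intros hr hrd hne h1 h2 h3 h4 z. split.
  - intros HW. split; unfold ball; rewrite dist2_sym; apply HW; unfold ball; split; lra.
  - intros [hz1 hz2] w [hw1 hw2]. unfold ball in *.
    set (d := dist2 x y) in *.
    destruct x as [x1 x2], y as [y1 y2], p1 as [a1 a2], p2 as [b1 b2], z as [z1 z2], w as [w1 w2].
    unfold dist2 in h1, h2, h3, h4, hz1, hz2, hw1, hw2. simpl in *.
    assert (hD : (x1-y1)^2+(x2-y2)^2 = d^2).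
    { apply sq_eq. sos2. reflexivity. }
    apply sq_eq in h1; [|sos2]. apply sq_eq in h2; [|sos2].
    apply sq_eq in h3; [|sos2]. apply sq_eq in h4; [|sos2].
    apply sq_le in hz1; [|lra|sos2]. apply sq_le in hz2; [|lra|sos2].
    apply sq_le in hw1; [|lra|sos2]. apply sq_le in hw2; [|lra|sos2].
    apply le_sq; [lra|].
    set (Y1 := y1 - x1). set (Y2 := y2 - x2).
    set (N1 := (a1-b1)/2). set (N2 := (a2-b2)/2).
    set (K := N1^2+N2^2).
    assert (hK : 0 < K).
    { destruct (Req_dec K 0) as [e|e].
      - exfalso. apply hne. unfold K, N1, N2 in e.
        assert (e2 : (a1-b1)^2 + (a2-b2)^2 = 0) by lra.
        pose proof (pow2_ge_0 (a1-b1)). pose proof (pow2_ge_0 (a2-b2)).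
        assert (e3 : (a1-b1)^2 = 0) by lra. assert (e4 : (a2-b2)^2 = 0) by lra. simpl in e3, e4.
        assert (e5 : Rsqr (a1-b1) = 0) by (unfold Rsqr; lra).
        assert (e6 : Rsqr (a2-b2) = 0) by (unfold Rsqr; lra).
        apply Rsqr_0_uniq in e5. apply Rsqr_0_uniq in e6.
        assert (a1 = b1) by lra. assert (a2 = b2) by lra. subst. reflexivity.
      - pose proof (pow2_ge_0 N1). pose proof (pow2_ge_0 N2). unfold K in *. lra. }
    set (n := sqrt K).
    assert (hn : 0 < n) by (apply sqrt_lt_R0; exact hK).
    assert (hn2 : n^2 = N1^2+N2^2) by (change (N1^2+N2^2) with K; unfold n; apply pow2_sqrt; lra).
    assert (hd : 0 < d) by lra.
    assert (hd2 : d^2 = Y1^2+Y2^2) by (unfold Y1, Y2; nra).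
    assert (PY1 : (a1-x1)*Y1+(a2-x2)*Y2 = r^2/2) by (unfold Y1, Y2; nra).
    assert (PY2 : (b1-x1)*Y1+(b2-x2)*Y2 = r^2/2) by (unfold Y1, Y2; nra).
    assert (YN : Y1*N1+Y2*N2 = 0) by (unfold N1, N2; lra).
    assert (PN1 : (a1-x1)*N1+(a2-x2)*N2 = n^2).
    { rewrite hn2. unfold N1, N2. nra. }
    assert (PN2 : (b1-x1)*N1+(b2-x2)*N2 = - n^2).
    { rewrite hn2. unfold N1, N2. nra. }
    set (s := ((z1-x1)*Y1+(z2-x2)*Y2)/d).
    set (t := ((z1-x1)*N1+(z2-x2)*N2)/n).
    set (u := ((w1-x1)*Y1+(w2-x2)*Y2)/d).
    set (v := ((w1-x1)*N1+(w2-x2)*N2)/n).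
    set (a := r^2/(2*d)).
    pose proof (pars Y1 Y2 N1 N2 (a1-x1) (a2-x2) d n hd hn hd2 hn2 YN) as Pa.
    rewrite PY1, PN1 in Pa.
    assert (hab : a^2 + n^2 = r^2).
    { unfold a. replace (r^2/2/d) with (r^2/(2*d)) in Pa by (field; lra).
      replace (n^2/n) with n in Pa by (field; lra). nra. }
    assert (had : 2*a*d = r^2) by (unfold a; field; lra).
    pose proof (pars Y1 Y2 N1 N2 (z1-a1) (z2-a2) d n hd hn hd2 hn2 YN) as Pz1.
    replace (((z1-a1)*Y1+(z2-a2)*Y2)/d) with (s - a) in Pz1.
    2:{ unfold s, a.
        replace ((z1-a1)*Y1+(z2-a2)*Y2) with (((z1-x1)*Y1+(z2-x2)*Y2) - ((a1-x1)*Y1+(a2-x2)*Y2)) by ring.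
        rewrite PY1. field. lra. }
    replace (((z1-a1)*N1+(z2-a2)*N2)/n) with (t - n) in Pz1.
    2:{ unfold t.
        replace ((z1-a1)*N1+(z2-a2)*N2) with (((z1-x1)*N1+(z2-x2)*N2) - ((a1-x1)*N1+(a2-x2)*N2)) by ring.
        rewrite PN1. field. lra. }
    pose proof (pars Y1 Y2 N1 N2 (z1-b1) (z2-b2) d n hd hn hd2 hn2 YN) as Pz2.
    replace (((z1-b1)*Y1+(z2-b2)*Y2)/d) with (s - a) in Pz2.
    2:{ unfold s, a. replace ((z1-b1)*Y1+(z2-b2)*Y2) with (((z1-x1)*Y1+(z2-x2)*Y2) - ((b1-x1)*Y1+(b2-x2)*Y2)) by ring. rewrite PY2. field. lra. }
    replace (((z1-b1)*N1+(z2-b2)*N2)/n) with (t + n) in Pz2.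
    2:{ unfold t. replace ((z1-b1)*N1+(z2-b2)*N2) with (((z1-x1)*N1+(z2-x2)*N2) - ((b1-x1)*N1+(b2-x2)*N2)) by ring. rewrite PN2. field. lra. }
    pose proof (pars Y1 Y2 N1 N2 (w1-x1) (w2-x2) d n hd hn hd2 hn2 YN) as Pw1.
    replace (((w1-x1)*Y1+(w2-x2)*Y2)/d) with (u) in Pw1.
    2:{ reflexivity. }
    replace (((w1-x1)*N1+(w2-x2)*N2)/n) with (v) in Pw1.
    2:{ reflexivity. }
    pose proof (pars Y1 Y2 N1 N2 (w1-y1) (w2-y2) d n hd hn hd2 hn2 YN) as Pw2.
    replace (((w1-y1)*Y1+(w2-y2)*Y2)/d) with (u - d) in Pw2.
    2:{ unfold u. replace ((w1-y1)*Y1+(w2-y2)*Y2) with (((w1-x1)*Y1+(w2-x2)*Y2) - (Y1*Y1+Y2*Y2)) by (unfold Y1, Y2; ring). replace (Y1*Y1+Y2*Y2) with (d^2) by lra. field. lra. }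
    replace (((w1-y1)*N1+(w2-y2)*N2)/n) with (v) in Pw2.
    2:{ unfold v. replace ((w1-y1)*N1+(w2-y2)*N2) with (((w1-x1)*N1+(w2-x2)*N2) - (Y1*N1+Y2*N2)) by (unfold Y1, Y2; ring). rewrite YN. field. lra. }
    pose proof (pars Y1 Y2 N1 N2 (z1-w1) (z2-w2) d n hd hn hd2 hn2 YN) as Pzw.
    replace (((z1-w1)*Y1+(z2-w2)*Y2)/d) with (s - u) in Pzw.
    2:{ unfold s, u. field. lra. }
    replace (((z1-w1)*N1+(z2-w2)*N2)/n) with (t - v) in Pzw.
    2:{ unfold t, v. field. lra. }
    enough (G : (z1-w1)^2+(z2-w2)^2 <= r^2) by (simpl in G; exact G).
    rewrite Pzw.
    apply (nice a n d r s t u v); try lra.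
    all: first [rewrite <- Pz1 | rewrite <- Pz2 | rewrite <- Pw1 | rewrite <- Pw2]; simpl in *; nra.
Qed.
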